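(* Let $\mathbf{uGraph}$ be the category of finite undirected multigraphs and let $\mathcal M$ be the class of its component-wise monic morphisms. Then $(\mathbf{uGraph},\mathcal M)$ is a finitary $\mathcal M$-adhesive category with an $\mathcal M$-initial object, $\mathcal M$-effective unions and an epi-$\mathcal M$-factorization; moreover all final pullback complements (FPCs) of composable pairs of $\mathcal M$-morphisms exist in $\mathbf{uGraph}$, and $\mathcal M$-morphisms are stable under FPCs. (That is, $\mathbf{uGraph}$ satisfies the standing assumptions required both for Double-Pushout (DPO) and for Sesqui-Pushout (SqPO) rewriting.)
   Context: Let $\mathcal P^{(1,2)}:\mathbf{Set}\to\mathbf{Set}$ send a set $S$ to the set of its subsets $P\subseteq S$ with $1\le |P|\le 2$ (and a map to its direct-image map). An object of $\mathbf{uGraph}$ is a triple $G=(E_G,V_G,i_G)$ of finite sets $E_G$ (edges), $V_G$ (vertices) and a map $i_G:E_G\to\mathcal P^{(1,2)}(V_G)$; a morphism $G\to H$ is a pair $(\varphi_E:E_G\to E_H,\varphi_V:V_G\to V_H)$ with $i_H\circ\varphi_E=\mathcal P^{(1,2)}(\varphi_V)\circ i_G$ (i.e. $\mathbf{uGraph}$ is the finitary restriction of the comma category $(\mathrm{Id}_{\mathbf{Set}},\mathcal P^{(1,2)})$). $\mathcal M$ is the class of morphisms whose two components are injective. Terminology: $(\mathbf C,\mathcal M)$ is $\mathcal M$-adhesive if pushouts and pullbacks along $\mathcal M$-morphisms exist, $\mathcal M$ contains all isomorphisms and is stable under pushout, pullback and composition, and pushouts along $\mathcal M$-morphisms are $\mathcal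 M$-van Kampen squares; finitary means every object has finitely many $\mathcal M$-subobjects up to isomorphism; an $\mathcal M$-initial object $\varnothing$ admits a unique $\mathcal M$-morphism $\varnothing\hookrightarrow X$ to every object $X$; $\mathcal M$-effective unions means: if a cospan $(B\hookrightarrow D\hookleftarrow C)$ of $\mathcal M$-morphisms is the pushout of a span $(B\hookleftarrow A\hookrightarrow C)$, then for every cospan $(B\hookrightarrow E\hookleftarrow C)$ of $\mathcal M$-morphisms whose pullback is $(B\hookleftarrow A\hookrightarrow C)$, the induced morphism $D\to E$ is in $\mathcal M$; an epi-$\mathcal M$-factorization means every morphism factors as $m\circ e$ with $e$ epi and $m\in\mathcal M$, uniquely up to isomorphism. For composable $a:A\to B$, $b:B\to D$, a pair $(c:C\to D,d:A\to C)$ is a final pullback complement (FPC) if $(a,d)$ is a pullback of $(b,c)$ and for every pullback $(a\circ p,q)$ of $(b,r)$ (with $r:C'\to D$) there is a morphism $s$ with $r=c\circ s$, unique up to isomorphism; $\mathcal M$ is stable under FPCs if the FPC of a composable pair of $\mathcal M$-morphisms (when it exists) consists of $\mathcal M$-morphisms. *)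

(* Defs.v *)
From mathcomp Require Import all_boot.
Set Implicit Arguments. Unset Strict Implicit. Unset Printing Implicit Defensive.

(* An object: finite edge set, finite vertex set, incidence map into
   P^(1,2)(V) = subsets P of V with 1 <= |P| <= 2. *)
Record uGraph := UGraph {
  gE : finType;
  gV : finType;
  ginc : gE -> {set gV};
  ginc_ok : forall e, 0 < #|ginc e| <= 2
}.

Record hom (G H : uGraph) := Hom {
  hE : gE G -> gE H;
  hV : gV G -> gV H;
  hom_ok : forall e : gE G, @ginc H (hE e) = hV @: @ginc G e
}.

Definition heq G H (f g : hom G H) : Prop :=
  hE f =1 hE g /\ hV f =1 hV g.

Definition hid (G : uGraph) : hom G G.
Proof. refine (@Hom G G id id _). move=> e; by rewrite imset_id. Defined.

Definition comp G H K (g : hom H K) (f : hom G H) : hom G K.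
Proof.
refine (@Hom G K (hE g \o hE f) (hV g \o hV f) _).
move=> e /=; by rewrite hom_ok hom_ok imset_comp.
Defined.

Definition inM G H (f : hom G H) : Prop := injective (hE f) /\ injective (hV f).

Definition is_iso G H (f : hom G H) : Prop :=
  exists g : hom H G, heq (comp g f) (hid G) /\ heq (comp f g) (hid H).

Definition is_epi G H (e : hom G H) : Prop :=
  forall W (u v : hom H W), heq (comp u e) (comp v e) -> heq u v.

(* Square   A --f--> B
            |        |
            g        h
            v        v
            C --k--> D      *)
Definition is_pullback A B C D (f : hom A B) (g : hom A C) (h : hom B D) (k : hom C D) : Prop :=
  heq (comp h f) (comp k g) /\
  forall X (x : hom X B) (y : hom X C), heq (comp h x) (comp k y) ->
    exists u : hom X A, [/\ heq (comp f u) x, heq (comp g u) y &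
      forall u' : hom X A, heq (comp f u') x -> heq (comp g u') y -> heq u' u].

Definition is_pushout A B C D (f : hom A B) (g : hom A C) (h : hom B D) (k : hom C D) : Prop :=
  heq (comp h f) (comp k g) /\
  forall X (x : hom B X) (y : hom C X), heq (comp x f) (comp y g) ->
    exists u : hom D X, [/\ heq (comp u h) x, heq (comp u k) y &
      forall u' : hom D X, heq (comp u' h) x -> heq (comp u' k) y -> heq u' u].

(* Bottom face: A -m-> B -g-> D, A -n-> C -f-> D.  Top face primed;
   vertical morphisms a b c d.  Back faces: (m',a,b,m), (n',a,c,n);
   front faces: (g',b,d,g), (f',c,d,f). *)
Definition M_VK A B C D (m : hom A B) (n : hom A C) (g : hom B D) (f : hom C D) : Prop :=
  forall A' B' C' D' (m' : hom A' B') (n' : hom A' C') (g' : hom B' D') (f' : hom C' D')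
         (a : hom A' A) (b : hom B' B) (c : hom C' C) (d : hom D' D),
    heq (comp g' m') (comp f' n') ->
    heq (comp m a) (comp b m') -> heq (comp n a) (comp c n') ->
    heq (comp g b) (comp d g') -> heq (comp f c) (comp d f') ->
    is_pullback m' a b m -> is_pullback n' a c n ->
    inM b -> inM c -> inM d ->
    (is_pushout m' n' g' f' <-> (is_pullback g' b d g /\ is_pullback f' c d f)).

Definition M_adhesive : Prop :=
  (forall A B C (m : hom A B) (n : hom A C), inM m ->
     exists D (g : hom B D) (f : hom C D), is_pushout m n g f) /\
  (forall B C D (g : hom B D) (k : hom C D), inM g ->
     exists A (f : hom A B) (h : hom A C), is_pullback f h g k) /\
  (forall G H (f : hom G H), is_iso f -> inM f) /\
  (forall G H K (f : hom G H) (g : hom H K), inM f -> inM g -> inM (comp g f)) /\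
  (forall A B C D (m : hom A B) (n : hom A C) (g : hom B D) (f : hom C D),
     is_pushout m n g f -> inM m -> inM f) /\
  (forall A B C D (f : hom A B) (g : hom A C) (h : hom B D) (k : hom C D),
     is_pullback f g h k -> inM h -> inM g) /\
  (forall A B C D (m : hom A B) (n : hom A C) (g : hom B D) (f : hom C D),
     inM m -> is_pushout m n g f -> M_VK m n g f).

Definition finitary : Prop :=
  forall X : uGraph, exists (k : nat) (F : 'I_k -> {A : uGraph & hom A X}),
    (forall i, inM (projT2 (F i))) /\
    forall A (m : hom A X), inM m ->
      exists i, exists h : hom A (projT1 (F i)), is_iso h /\ heq (comp (projT2 (F i)) h) m.

Definition has_M_initial : Prop :=
  exists I : uGraph, forall X : uGraph,
    (exists i : hom I X, inM i) /\
    (forall i j : hom I X, inM i -> inM j -> heq i j).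

Definition M_effective_unions : Prop :=
  forall A B C D E (b : hom A B) (c : hom A C) (g : hom B D) (f : hom C D)
         (g' : hom B E) (f' : hom C E),
    inM b -> inM c -> inM g -> inM f -> inM g' -> inM f' ->
    is_pushout b c g f -> is_pullback b c g' f' ->
    forall u : hom D E, heq (comp u g) g' -> heq (comp u f) f' -> inM u.

Definition epi_M_factorization : Prop :=
  forall X Y (f : hom X Y), exists Z (e : hom X Z) (m : hom Z Y),
    [/\ is_epi e, inM m, heq (comp m e) f &
      forall Z' (e' : hom X Z') (m' : hom Z' Y), is_epi e' -> inM m' -> heq (comp m' e') f ->
        exists i : hom Z Z', [/\ is_iso i, heq (comp i e) e' & heq (comp m' i) m]].

Definition is_FPC A B C D (a : hom A B) (b : hom B D) (c : hom C D) (d : hom A C) : Prop :=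
  is_pullback a d b c /\
  forall A' C' (p : hom A' A) (q : hom A' C') (r : hom C' D),
    is_pullback (comp a p) q b r ->
    exists s : hom C' C, [/\ heq (comp c s) r, heq (comp s q) (comp d p) &
      forall s' : hom C' C, heq (comp c s') r -> heq (comp s' q) (comp d p) -> heq s' s].

Definition FPCs_of_M_exist : Prop :=
  forall A B D (a : hom A B) (b : hom B D), inM a -> inM b ->
    exists C (c : hom C D) (d : hom A C), is_FPC a b c d.

Definition M_stable_under_FPC : Prop :=
  forall A B C D (a : hom A B) (b : hom B D) (c : hom C D) (d : hom A C),
    inM a -> inM b -> is_FPC a b c d -> inM c /\ inM d.

(* Main.v *)
Require Import Defs.
From mathcomp Require Import all_boot.
From Stdlib Require Import Classical_Prop.
Import Defs.
Set Implicit Arguments. Unset Strict Implicit. Unset Printing Implicit Defensive.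

Definition sPB (A B C D : Type) (f : A -> B) (g : A -> C) (h : B -> D) (k : C -> D) :=
  [/\ forall a, h (f a) = k (g a),
      forall b c, h b = k c -> exists a, f a = b /\ g a = c &
      forall a a', f a = f a' -> g a = g a' -> a = a'].

Definition sPO (A B C D : Type) (m : A -> B) (n : A -> C) (g : B -> D) (f : C -> D) :=
  [/\ forall a, g (m a) = f (n a), injective f,
      forall d, (exists b, g b = d) \/ (exists c, f c = d),
      forall b c, g b = f c -> exists a, m a = b &
      forall b b', g b = g b' -> b <> b' -> exists a, m a = b].

Lemma sPB_inj (A B C D : Type) (f : A -> B) (g : A -> C) (h : B -> D) (k : C -> D) :
  sPB f g h k -> injective h -> injective g.
Proof.
case=> H1 _ H3 hi a a' e; apply: H3 => //; apply: hi; by rewrite !H1 e.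
Qed.

Lemma sPO_univ (A B C D : finType) (m : A -> B) (n : A -> C) (g : B -> D) (f : C -> D)
  (X : Type) (x : B -> X) (y : C -> X) :
  sPO m n g f -> (forall a, x (m a) = y (n a)) ->
  exists u : D -> X, (forall b, u (g b) = x b) /\ (forall c, u (f c) = y c).
Proof.
case=> P1 P2 P3 P4 P5 Hxy.
pose P d (s : B + C) := match s with inl b => g b == d | inr c => f c == d end.
pose v (s : B + C) := match s with inl b => x b | inr c => y c end.
have Hs : forall d, exists s, P d s.
  move=> d; case: (P3 d) => [[b <-]|[c <-]]; [exists (inl b) | exists (inr c)]; exact: eqxx.
have wd : forall d s1 s2, P d s1 -> P d s2 -> v s1 = v s2.
  have gf : forall b c, g b = f c -> x b = y c.
    move=> b c e; case: (P4 _ _ e) => a ea; subst b.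
    by rewrite Hxy (P2 _ _ (etrans (esym e) (P1 a))).
  move=> d [b1|c1] [b2|c2] /= /eqP e1 /eqP e2; subst d.
  - have [->|ne] := eqVneq b1 b2; first by [].
    case: (P5 _ _ (esym e2) (elimN eqP ne)) => a ea; subst b1.
    have e3 : g b2 = f (n a) by rewrite e2 P1.
    by rewrite (gf _ _ e3) Hxy.
  - by rewrite /= (gf _ _ (esym e2)).
  - by rewrite /= (gf _ _ e2).
  - by rewrite (P2 _ _ e2).
exists (fun d => v (xchoose (Hs d))); split.
- move=> b /=; rewrite -[x b]/(v (inl b)); apply: (wd (g b)); [exact: xchooseP | exact: eqxx].
- move=> c /=; rewrite -[y c]/(v (inr c)); apply: (wd (f c)); [exact: xchooseP | exact: eqxx].
Qed.

Lemma sPO_transfer (A B C D D' : Type) (m : A -> B) (n : A -> C) (g : B -> D) (f : C -> D)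
  (g' : B -> D') (f' : C -> D') (u : D -> D') :
  sPO m n g f -> injective u -> (forall d', exists d, u d = d') ->
  (forall b, u (g b) = g' b) -> (forall c, u (f c) = f' c) -> sPO m n g' f'.
Proof.
case=> P1 P2 P3 P4 P5 ui us eg ef; constructor.
- by move=> a; rewrite -eg -ef P1.
- by move=> c c' e; apply: P2; apply: ui; rewrite !ef.
- move=> d'; case: (us d') => d <-; case: (P3 d) => [[b <-]|[c <-]].
  + by left; exists b; rewrite eg.
  + by right; exists c; rewrite ef.
- move=> b c e; apply: (P4 b c); apply: ui; by rewrite eg ef.
- move=> b b' e; apply: (P5 b b'); apply: ui; by rewrite !eg.
Qed.

Lemma sVK (A B C D A' B' C' D' : Type)
  (m : A -> B) (n : A -> C) (g : B -> D) (f : C -> D)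
  (m' : A' -> B') (n' : A' -> C') (g' : B' -> D') (f' : C' -> D')
  (a : A' -> A) (b : B' -> B) (c : C' -> C) (d : D' -> D) :
  sPO m n g f -> injective b -> injective c -> injective d ->
  (forall x, g' (m' x) = f' (n' x)) ->
  (forall x, m (a x) = b (m' x)) -> (forall x, n (a x) = c (n' x)) ->
  (forall x, g (b x) = d (g' x)) -> (forall x, f (c x) = d (f' x)) ->
  sPB m' a b m -> sPB n' a c n ->
  (sPO m' n' g' f' <-> sPB g' b d g /\ sPB f' c d f).
Proof.
case=> P1 P2 P3 P4 P5 bi ci di T1 F1 F2 F3 F4 [B1 B2 B3] [C1 C2 C3].
split.
- case=> Q1 Q2 Q3 Q4 Q5; split; split.
  + by move=> x; rewrite F3.
  + move=> z y e.
    case: (Q3 z) => [[x' ex']|[c' ec']]; subst z.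
    * case: (classic (b x' = y)) => [ey|ne]; first by exists x'.
      have e2 : g (b x') = g y by rewrite F3.
      case: (P5 _ _ e2 ne) => a1 ea1.
      have e3 : g y = f (n a1) by rewrite -e2 -ea1 P1.
      case: (P4 _ _ e3) => a2 ea2.
      have e4 : n a1 = n a2 by apply: P2; rewrite -e3 -P1 ea2.
      case: (B2 _ _ (esym ea1)) => a' [ea' ea'2].
      have e5 : c (n' a') = n a2 by rewrite -e4 -ea'2 F2.
      case: (C2 _ _ e5) => a'' [ea'' ea''2].
      exists (m' a''); split; last by rewrite -F1 ea''2 ea2.
      by rewrite T1 ea'' -T1 ea'.
    * have e3 : g y = f (c c') by rewrite F4 e.
      case: (P4 _ _ e3) => a2 ea2.
      have e4 : c c' = n a2 by apply: P2; rewrite -e3 -P1 ea2.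
      case: (C2 _ _ e4) => a'' [ea'' ea''2].
      exists (m' a''); split; last by rewrite -F1 ea''2 ea2.
      by rewrite T1 ea''.
  + by move=> x x' _ e; apply: bi.
  + by move=> x; rewrite F4.
  + move=> z y e.
    case: (Q3 z) => [[x' ex']|[c' ec']]; subst z.
    * have e2 : g (b x') = f y by rewrite F3.
      case: (P4 _ _ e2) => a1 ea1.
      have e3 : y = n a1 by apply: P2; rewrite -e2 -ea1 P1.
      case: (B2 _ _ (esym ea1)) => a' [ea' ea'2].
      exists (n' a'); split; first by rewrite -T1 ea'.
      by rewrite -F2 ea'2 e3.
    * exists c'; split => //; apply: P2; by rewrite F4.
  + by move=> x x' _ e; apply: ci.
- case=> [[G1 G2 G3] [H1 H2 H3]]; split.
  + exact: T1.
  + move=> x x' e; apply: ci; apply: P2; by rewrite !F4 e.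
  + move=> z; case: (P3 (d z)) => [[y ey]|[y ey]].
    * case: (G2 _ _ (esym ey)) => x [ex _]; left; by exists x.
    * case: (H2 _ _ (esym ey)) => x [ex _]; right; by exists x.
  + move=> x y e.
    have e2 : g (b x) = f (c y) by rewrite F3 F4 e.
    case: (P4 _ _ e2) => a1 ea1.
    case: (B2 _ _ (esym ea1)) => a' [ea' _]; by exists a'.
  + move=> x x' e ne.
    have e2 : g (b x) = g (b x') by rewrite !F3 e.
    have ne2 : b x <> b x' by move=> /bi.
    case: (P5 _ _ e2 ne2) => a1 ea1.
    case: (B2 _ _ (esym ea1)) => a' [ea' _]; by exists a'.
Qed.

Lemma imset_card_ok (aT rT : finType) (f : aT -> rT) (S : {set aT}) :
  0 < #|S| <= 2 -> 0 < #|f @: S| <= 2.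
Proof.
case/andP=> H1 H2; apply/andP; split.
- by rewrite card_gt0 imset_eq0 -card_gt0.
- exact: leq_trans (leq_imset_card _ _) H2.
Qed.

Section MkHom.
Variables (X Y Z : uGraph) (t : hom X Y) (m : hom Z Y) (mi : inM m)
  (iE : gE X -> gE Z) (iV : gV X -> gV Z)
  (HE : forall e, hE m (iE e) = hE t e) (HV : forall v, hV m (iV v) = hV t v).
Lemma mkhom_ok e : ginc (iE e) = iV @: ginc e.
Proof.
apply: (imset_inj mi.2); rewrite -hom_ok HE hom_ok -imset_comp.
by apply: eq_imset => v; rewrite /= HV.
Qed.
Definition mkhom : hom X Z := Hom mkhom_ok.
End MkHom.

Definition cPB A B C D (f : hom A B) (g : hom A C) (h : hom B D) (k : hom C D) :=
  sPB (hE f) (hE g) (hE h) (hE k) /\ sPB (hV f) (hV g) (hV h) (hV k).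

Definition ptG : uGraph :=
  @UGraph void unit (fun e => match e with end) (fun e => match e with end).
Definition ptH (G : uGraph) (v : gV G) : hom ptG G :=
  @Hom ptG G (fun e => match e with end) (fun _ => v) (fun e => match e with end).
Definition edgeG (V : finType) (S : {set V}) (H : 0 < #|S| <= 2) : uGraph :=
  @UGraph unit V (fun _ => S) (fun _ => H).

Lemma imset_val_setT (T : finType) (S : {set T}) :
  val @: [set: {v : T | v \in S}] = S.
Proof.
apply/setP => v; apply/imsetP/idP => [[w _ ->]|vin]; first exact: valP.
by exists (exist _ v vin).
Qed.

Lemma sig_card_ok (T : finType) (S : {set T}) :
  0 < #|S| <= 2 -> 0 < #|[set: {v : T | v \in S}]| <= 2.
Proof.
by rewrite -{1 2}(imset_val_setT S) (card_imset _ val_inj).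
Qed.

Lemma PB_cPB A B C D (f : hom A B) (g : hom A C) (h : hom B D) (k : hom C D) :
  is_pullback f g h k -> inM h -> cPB f g h k.
Proof.
case=> [[c1 c2] U] [hiE hiV].
have sV : sPB (hV f) (hV g) (hV h) (hV k).
  split.
  - exact: c2.
  - move=> vb vc e.
    have hx : heq (comp h (ptH vb)) (comp k (ptH vc)) by split => [[]|[]].
    case: (U _ _ _ hx) => u [[_ u1] [_ u2] _].
    by exists (hV u tt); split; [exact: (u1 tt) | exact: (u2 tt)].
  - move=> p1 p2 e1 e2.
    have hx : heq (comp h (ptH (hV f p1))) (comp k (ptH (hV g p1))).
      by split => [[]|[]]; exact: c2.
    case: (U _ _ _ hx) => u [_ _ uU].
    have [_ q1] : heq (ptH p1) u by apply: uU; split => [[]|[]].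
    have [_ q2] : heq (ptH p2) u by apply: uU; split => [[]|[]] /=.
    by have := q1 tt; have := q2 tt; rewrite /= => -> ->.
have gVi : injective (hV g) by apply: sPB_inj sV hiV.
split=> //; split.
- exact: c1.
- move=> eb ec e.
  pose VX := {v : gV C | v \in ginc ec}.
  pose X := edgeG (sig_card_ok (ginc_ok ec)).
  have yok : forall ee : gE X, ginc ((fun _ => ec) ee) = val @: ginc ee.
    by move=> ee; rewrite /= imset_val_setT.
  pose y : hom X C := Hom yok.
  have Hex : forall w : gV X, exists vb, hV h vb == hV k (val w).
    move=> w; have : hV k (val w) \in hV h @: ginc eb.
      by rewrite -hom_ok e hom_ok; apply: imset_f; exact: valP.
    by case/imsetP => vb _ ->; exists vb.
  pose xv w := xchoose (Hex w).
  have HE : forall ee : gE X, hE h ((fun _ => eb) ee) = hE (comp k y) ee by [].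
  have HV : forall w : gV X, hV h (xv w) = hV (comp k y) w.
    by move=> w; apply/eqP; exact: (xchooseP (Hex w)).
  pose x := mkhom (conj hiE hiV) HE HV.
  have hx : heq (comp h x) (comp k y) by split => [ee|w] /=; [exact: e | exact: HV].
  case: (U _ _ _ hx) => u [[u1 _] [u2 _] _].
  by exists (hE u tt); split; [exact: (u1 tt) | exact: (u2 tt)].
- move=> p1 p2 e1 e2.
  pose X := edgeG (ginc_ok p1).
  have ok1 : forall ee : gE X, ginc ((fun _ => p1) ee) = id @: ginc ee.
    by move=> ee; rewrite imset_id.
  have ep : ginc p2 = ginc p1 by apply: (imset_inj gVi); rewrite -!hom_ok e2.
  have ok2 : forall ee : gE X, ginc ((fun _ => p2) ee) = id @: ginc ee.
    by move=> ee; rewrite imset_id.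
  pose u1 : hom X A := Hom ok1.
  pose u2 : hom X A := Hom ok2.
  have hx : heq (comp h (comp f u1)) (comp k (comp g u1)).
    by split => [ee|w] /=; [exact: c1 | exact: c2].
  case: (U _ _ _ hx) => u [_ _ uU].
  have [q1 _] : heq u1 u by apply: uU.
  have [q2 _] : heq u2 u by apply: uU; split => //= ee; rewrite ?e1 ?e2.
  by rewrite -[p1]/(hE u1 tt) -[p2]/(hE u2 tt) q1 q2.
Qed.

Lemma cPB_PB A B C D (f : hom A B) (g : hom A C) (h : hom B D) (k : hom C D) :
  cPB f g h k -> inM h -> is_pullback f g h k.
Proof.
move=> [sE sV] hi.
have gi : inM g by split; [apply: sPB_inj sE hi.1 | apply: sPB_inj sV hi.2].
case: sE => E1 E2 E3; case: sV => V1 V2 V3.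
split; first by split; [exact: E1 | exact: V1].
move=> X x y [hx1 hx2].
have HexE : forall e, exists p, (hE f p == hE x e) && (hE g p == hE y e).
  by move=> e; case: (E2 _ _ (hx1 e)) => p [<- <-]; exists p; rewrite !eqxx.
have HexV : forall v, exists p, (hV f p == hV x v) && (hV g p == hV y v).
  by move=> v; case: (V2 _ _ (hx2 v)) => p [<- <-]; exists p; rewrite !eqxx.
pose uE e := xchoose (HexE e).
pose uV v := xchoose (HexV v).
have HE : forall e, hE g (uE e) = hE y e.
  by move=> e; case/andP: (xchooseP (HexE e)) => _ /eqP.
have HV : forall v, hV g (uV v) = hV y v.
  by move=> v; case/andP: (xchooseP (HexV v)) => _ /eqP.
exists (mkhom gi HE HV); split.
- by split => [e|v] /=; [case/andP: (xchooseP (HexE e)) => /eqP | case/andP: (xchooseP (HexV v)) => /eqP].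
- by split => [e|v] /=.
- move=> u' [q1 q2] [q3 q4]; split => [e|v] /=.
  + apply: E3.
    * have := q1 e => /= ->; by case/andP: (xchooseP (HexE e)) => /eqP ->.
    * have := q3 e => /= ->; by rewrite HE.
  + apply: V3.
    * have := q2 v => /= ->; by case/andP: (xchooseP (HexV v)) => /eqP ->.
    * have := q4 v => /= ->; by rewrite HV.
Qed.

Definition cPO A B C D (m : hom A B) (n : hom A C) (g : hom B D) (f : hom C D) :=
  sPO (hE m) (hE n) (hE g) (hE f) /\ sPO (hV m) (hV n) (hV g) (hV f).

Lemma cPO_PO A B C D (m : hom A B) (n : hom A C) (g : hom B D) (f : hom C D) :
  cPO m n g f -> is_pushout m n g f.
Proof.
move=> [sE sV].
have [E1 E2 E3 E4 E5] := sE; have [V1 V2 V3 V4 V5] := sV.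
split; first by split; [exact: E1 | exact: V1].
move=> X x y [hx1 hx2].
have [uE [uE1 uE2]] := sPO_univ sE hx1.
have [uV [uV1 uV2]] := sPO_univ sV hx2.
have ok : forall d, ginc (uE d) = uV @: ginc d.
  move=> d; case: (E3 d) => [[b <-]|[c <-]].
  - rewrite uE1 !hom_ok -imset_comp; apply: eq_imset => v /=; by rewrite uV1.
  - rewrite uE2 !hom_ok -imset_comp; apply: eq_imset => v /=; by rewrite uV2.
exists (Hom ok); split.
- by split => ? /=; rewrite ?uE1 ?uV1.
- by split => ? /=; rewrite ?uE2 ?uV2.
- move=> u' [q1 q2] [q3 q4]; split => [d|d] /=.
  + case: (E3 d) => [[b <-]|[c <-]]; [rewrite uE1; exact: q1 | rewrite uE2; exact: q3].
  + case: (V3 d) => [[b <-]|[c <-]]; [rewrite uV1; exact: q2 | rewrite uV2; exact: q4].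
Qed.

Section POset.
Variables (A B C : finType) (m : A -> B) (n : A -> C).
Definition rPO (s : C + B) : C + B :=
  match s with
  | inl c => inl c
  | inr b => if [pick a | m a == b] is Some a then inl (n a) else inr b
  end.
Lemma rPO_idem s : rPO (rPO s) == rPO s.
Proof.
case: s => [c|b] //=; case E: [pick a | m a == b] => [a|] //=; by rewrite E.
Qed.
Definition POT := {s : C + B | rPO s == s}.
Definition piPO (s : C + B) : POT := exist _ (rPO s) (rPO_idem s).
Definition gPO b := piPO (inr b).
Definition fPO c := piPO (inl c).
Lemma piPO_val (d : POT) : piPO (val d) = d.
Proof. by apply: val_inj => /=; apply/eqP; exact: (valP d). Qed.

Lemma gPO_val b : val (gPO b) = if [pick a | m a == b] is Some a then inl (n a) else inr b.
Proof. by []. Qed.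

Lemma sPO_POset : injective m -> sPO m n gPO fPO.
Proof.
move=> mi; split.
- move=> a; apply: val_inj; rewrite gPO_val /=.
  case: pickP => [a' /eqP e|H]; first by rewrite (mi _ _ e).
  by have := H a; rewrite eqxx.
- by move=> c c' /(congr1 val) [].
- move=> d; move: (piPO_val d); case: (val d) => [c|b] <-; [right; exists c | left; exists b]; by [].
- move=> b c /(congr1 val); rewrite gPO_val /=.
  case: pickP => [a /eqP e _|_ //]; by exists a.
- move=> b b' /(congr1 val); rewrite !gPO_val.
  case: pickP => [a /eqP e _ _|_]; first by exists a.
  case: pickP => [a _ //|_ [] //].
Qed.
End POset.

Section POG.
Variables (A B C : uGraph) (m : hom A B) (n : hom A C) (mi : inM m).
Definition E0 := POT (hE m) (hE n).
Definition V0 := POT (hV m) (hV n).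
Definition gV0 : gV B -> V0 := gPO (hV m) (hV n).
Definition fV0 : gV C -> V0 := fPO (hV m) (hV n).
Definition inc0 (d : E0) : {set V0} :=
  match val d with inl c => fV0 @: ginc c | inr b => gV0 @: ginc b end.
Lemma inc0_ok d : 0 < #|inc0 d| <= 2.
Proof. by rewrite /inc0; case: (val d) => x; apply: imset_card_ok; apply: ginc_ok. Qed.
Definition P0 := UGraph inc0_ok.
Lemma g0_ok (b : gE B) : @ginc P0 (gPO (hE m) (hE n) b) = gV0 @: ginc b.
Proof.
rewrite /= /inc0 gPO_val; case: pickP => [a /eqP <-|_] //=.
rewrite !hom_ok -!imset_comp; apply: eq_imset => v /=.
by have [V1 _ _ _ _] := sPO_POset (hV n) mi.2; rewrite /gV0 /fV0 V1.
Qed.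
Definition g0 : hom B P0 := Hom g0_ok.
Lemma f0_ok (c : gE C) : @ginc P0 (fPO (hE m) (hE n) c) = fV0 @: ginc c.
Proof. by []. Qed.
Definition f0 : hom C P0 := Hom f0_ok.
Lemma cPO_P0 : cPO m n g0 f0.
Proof. split; [exact: (sPO_POset _ mi.1) | exact: (sPO_POset _ mi.2)]. Qed.
End POG.

Lemma PO_cPO A B C D (m : hom A B) (n : hom A C) (g : hom B D) (f : hom C D) :
  is_pushout m n g f -> inM m -> cPO m n g f.
Proof.
move=> [[c1 c2] U] mi.
have cp := cPO_P0 n mi.
have pp := cPO_PO cp.
case: (cp) => sE sV.
have [E1 _ E3 _ _] := sE; have [V1 _ V3 _ _] := sV.
have hx : heq (comp (g0 n mi) m) (comp (f0 m n) n) by split; [exact: E1 | exact: V1].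
case: (U _ _ _ hx) => w [[w1 w2] [w3 w4] _].
case: pp => _ /(_ _ g f (conj c1 c2)) [u [[u1 u2] [u3 u4] _]].
have hgf : heq (comp g m) (comp f n) by split; [exact: c1 | exact: c2].
case: (U _ _ _ hgf) => z [_ _ zU].
have [uw1 uw2] : heq (comp u w) (hid D).
  have [q1 q2] : heq (comp u w) z.
    apply: zU; split => x /=.
    - by have := w1 x => /= ->; exact: u1.
    - by have := w2 x => /= ->; exact: u2.
    - by have := w3 x => /= ->; exact: u3.
    - by have := w4 x => /= ->; exact: u4.
  have [q3 q4] : heq (hid D) z by apply: zU.
  by split => x; [rewrite (q1 x) (q3 x) | rewrite (q2 x) (q4 x)].
have wuE : forall d, hE w (hE u d) = d.
  move=> d; case: (E3 d) => [[b <-]|[c <-]].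
  - by have := u1 b => /= ->; exact: w1.
  - by have := u3 c => /= ->; exact: w3.
have wuV : forall d, hV w (hV u d) = d.
  move=> d; case: (V3 d) => [[b <-]|[c <-]].
  - by have := u2 b => /= ->; exact: w2.
  - by have := u4 c => /= ->; exact: w4.
split.
- apply: (sPO_transfer sE (can_inj wuE)) => [d|b|c].
  + by exists (hE w d); exact: uw1.
  + exact: u1.
  + exact: u3.
- apply: (sPO_transfer sV (can_inj wuV)) => [d|b|c].
  + by exists (hV w d); exact: uw2.
  + exact: u2.
  + exact: u4.
Qed.

Section Sub.
Variables (X : uGraph) (SE : {set gE X}) (SV : {set gV X}).
Definition subE := {e : gE X | (e \in SE) && (ginc e \subset SV)}.
Definition subV := {v : gV X | v \in SV}.
Definition subinc (e : subE) : {set subV} := [set v : subV | val v \in ginc (val e)].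
Lemma subinc_img e : val @: subinc e = ginc (val e).
Proof.
apply/setP => v; apply/imsetP/idP => [[w]|vin].
- by rewrite inE => wi ->.
- have vS : v \in SV := subsetP (andP (valP e)).2 v vin.
  by exists (exist _ v vS); rewrite ?inE.
Qed.
Lemma subinc_ok e : 0 < #|subinc e| <= 2.
Proof. by rewrite -(card_imset _ val_inj) subinc_img; apply: ginc_ok. Qed.
Definition subG := UGraph subinc_ok.
Definition inclG : hom subG X := @Hom subG X val val (fun e => esym (subinc_img e)).
Lemma inclG_M : inM inclG. Proof. split; exact: val_inj. Qed.
Lemma subE_in (e : gE subG) : val e \in SE. Proof. by case/andP: (valP e). Qed.
Lemma subV_in (v : gV subG) : val v \in SV. Proof. exact: valP. Qed.
Lemma subE_mk (e : gE X) : e \in SE -> ginc e \subset SV -> exists e' : gE subG, val e' = e.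
Proof. by move=> H1 H2; exists (exist _ e (introT andP (conj H1 H2))). Qed.
Lemma subV_mk (v : gV X) : v \in SV -> exists v' : gV subG, val v' = v.
Proof. by move=> H1; exists (exist _ v H1). Qed.
End Sub.

Lemma inj_surj_bij (T T' : finType) (f : T -> T') :
  injective f -> (forall y, exists x, f x = y) -> bijective f.
Proof.
move=> fi fs.
have H : forall y, exists x, f x == y by move=> y; case: (fs y) => x <-; exists x.
exists (fun y => xchoose (H y)) => [x|y].
- by apply: fi; apply/eqP; exact: (xchooseP (H (f x))).
- by apply/eqP; exact: (xchooseP (H y)).
Qed.

Lemma bij_iso G H (f : hom G H) : bijective (hE f) -> bijective (hV f) -> is_iso f.
Proof.
case=> gE' gE1 gE2; case=> gV' gV1 gV2.
have ok : forall e, ginc (gE' e) = gV' @: ginc e.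
  move=> e; rewrite -{2}[e]gE2 hom_ok -imset_comp.
  apply/setP => v; apply/idP/imsetP => [vi|[w wi ->]]; last by rewrite /= gV1.
  by exists v; rewrite //= gV1.
by exists (Hom ok); split; split => x /=; rewrite ?gE1 ?gE2 ?gV1 ?gV2.
Qed.

Lemma sPB_inj2 (A B C D : Type) (f : A -> B) (g : A -> C) (h : B -> D) (k : C -> D) :
  sPB f g h k -> injective k -> injective f.
Proof.
case=> H1 _ H3 ki a a' e; apply: H3 => //; apply: ki; by rewrite -!H1 e.
Qed.

Section PBG.
Variables (B C D : uGraph) (g : hom B D) (k : hom C D) (gi : inM g).
Definition SEq := [set e | hE k e \in codom (hE g)].
Definition SVq := [set v | hV k v \in codom (hV g)].
Definition Q0 := subG SEq SVq.
Definition q0 : hom Q0 C := inclG SEq SVq.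
Lemma qE_in (e : gE Q0) : hE k (val e) \in codom (hE g).
Proof. by have := subE_in e; rewrite inE. Qed.
Lemma qV_in (v : gV Q0) : hV k (val v) \in codom (hV g).
Proof. by have := subV_in v; rewrite inE. Qed.
Lemma qHE (e : gE Q0) : hE g (iinv (qE_in e)) = hE (comp k q0) e.
Proof. exact: f_iinv. Qed.
Lemma qHV (v : gV Q0) : hV g (iinv (qV_in v)) = hV (comp k q0) v.
Proof. exact: f_iinv. Qed.
Definition p0 : hom Q0 B := mkhom gi qHE qHV.
Lemma PB_Q0 : is_pullback p0 q0 g k.
Proof.
apply: cPB_PB => //; split; split.
- exact: qHE.
- move=> b c e.
  have cS : c \in SEq by rewrite inE -e codom_f.
  have cV : ginc c \subset SVq.
    apply/subsetP => v vi; rewrite inE.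
    have : hV k v \in hV k @: ginc c by apply: imset_f.
    by rewrite -hom_ok -e hom_ok => /imsetP [w _ ->]; exact: codom_f.
  case: (subE_mk cS cV) => e' ev; exists e'; split => //.
  by apply: gi.1; rewrite qHE /= ev.
- by move=> x y _ /val_inj.
- exact: qHV.
- move=> b c e.
  have cS : c \in SVq by rewrite inE -e codom_f.
  case: (subV_mk SEq cS) => v' ev; exists v'; split => //.
  by apply: gi.2; rewrite qHV /= ev.
- by move=> x y _ /val_inj.
Qed.
End PBG.

Lemma M_adhesive_thm : M_adhesive.
Proof.
split.
  move=> A B C m n mi; exists (P0 m n), (g0 n mi), (f0 m n); exact: cPO_PO (cPO_P0 n mi).
split.
  move=> B C D g k gi; exists (Q0 g k), (p0 k gi), (q0 g k); exact: PB_Q0.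
split.
  move=> G H f [g [[e1 v1] _]]; split.
  - by apply: (can_inj (g := hE g)) => x; exact: e1.
  - by apply: (can_inj (g := hV g)) => x; exact: v1.
split.
  by move=> G H K f g [f1 f2] [g1 g2]; split; apply: inj_comp.
split.
  move=> A B C D m n g f po mi; have [[_ E2 _ _ _] [_ V2 _ _ _]] := PO_cPO po mi; by split.
split.
  move=> A B C D f g h k pb hi; have [sE sV] := PB_cPB pb hi.
  by split; [apply: sPB_inj sE hi.1 | apply: sPB_inj sV hi.2].
move=> A B C D m n g f mi po.
have [pE pV] := PO_cPO po mi.
move=> A' B' C' D' m' n' g' f' a b c d [t1 t2] [fa1 fa2] [fb1 fb2] [fc1 fc2] [fd1 fd2]
  pbm pbn bi ci di.
have [bmE bmV] := PB_cPB pbm bi.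
have [bnE bnV] := PB_cPB pbn ci.
have m'i : inM m' by split; [apply: sPB_inj2 bmE mi.1 | apply: sPB_inj2 bmV mi.2].
have vkE := sVK pE bi.1 ci.1 di.1 t1 fa1 fb1 fc1 fd1 bmE bnE.
have vkV := sVK pV bi.2 ci.2 di.2 t2 fa2 fb2 fc2 fd2 bmV bnV.
split.
- move=> po'; have [qE qV] := PO_cPO po' m'i.
  have [[x1 x2] [x3 x4]] := (vkE.1 qE, vkV.1 qV).
  by split; apply: cPB_PB.
- case=> pb1 pb2.
  have [y1 y2] := PB_cPB pb1 di; have [y3 y4] := PB_cPB pb2 di.
  by apply: cPO_PO; split; [apply: vkE.2 | apply: vkV.2].
Qed.

Section Img.
Variables (X Y : uGraph) (f : hom X Y).
Definition SEi := hE f @: setT.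
Definition SVi := hV f @: setT.
Definition IG := subG SEi SVi.
Definition iI : hom IG Y := inclG SEi SVi.
Lemma eIE_in (e : gE X) : (hE f e \in SEi) && (ginc (hE f e) \subset SVi).
Proof.
rewrite imset_f ?inE //= hom_ok; apply: imsetS; exact: subsetT.
Qed.
Lemma eIV_in (v : gV X) : hV f v \in SVi.
Proof. by rewrite imset_f ?inE. Qed.
Definition eIE (e : gE X) : gE IG := exist _ (hE f e) (eIE_in e).
Definition eIV (v : gV X) : gV IG := exist _ (hV f v) (eIV_in v).
Lemma eIHE e : hE iI (eIE e) = hE f e. Proof. by []. Qed.
Lemma eIHV v : hV iI (eIV v) = hV f v. Proof. by []. Qed.
Definition eI : hom X IG := mkhom (inclG_M SEi SVi) eIHE eIHV.
Lemma eI_surjE z : exists x, hE eI x = z.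
Proof.
have := subE_in z; case/imsetP => x _ ex; exists x; apply: val_inj; by rewrite /= ex.
Qed.
Lemma eI_surjV z : exists x, hV eI x = z.
Proof.
have := subV_in z; case/imsetP => x _ ex; exists x; apply: val_inj; by rewrite /= ex.
Qed.
Lemma eI_fact : heq (comp iI eI) f. Proof. by split. Qed.
End Img.

Lemma surj_epi G H (e : hom G H) :
  (forall z, exists x, hE e x = z) -> (forall z, exists x, hV e x = z) -> is_epi e.
Proof.
move=> sE sV W u v [h1 h2]; split => z.
- by case: (sE z) => x <-; exact: h1.
- by case: (sV z) => x <-; exact: h2.
Qed.

Lemma epi_surj G H (e : hom G H) : is_epi e ->
  (forall z, exists x, hE e x = z) /\ (forall z, exists x, hV e x = z).
Proof.
move=> ep.
pose i := iI e; have ii : inM i := inclG_M _ _.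
have [sE sV] := cPO_P0 i ii.
have [E1 _ _ E4 _] := sE; have [V1 _ _ V4 _] := sV.
have h : heq (comp (g0 i ii) e) (comp (f0 i i) e).
  split => x /=.
  - by have := E1 (hE (eI e) x).
  - by have := V1 (hV (eI e) x).
have [h1 h2] := ep _ _ _ h.
split => z.
- case: (E4 _ _ (h1 z)) => a ea; case: (eI_surjE a) => x ex; exists x.
  by rewrite -ea -ex.
- case: (V4 _ _ (h2 z)) => a ea; case: (eI_surjV a) => x ex; exists x.
  by rewrite -ea -ex.
Qed.

Lemma epi_M_thm : epi_M_factorization.
Proof.
move=> X Y f; exists (IG f), (eI f), (iI f); split.
- exact: surj_epi (@eI_surjE _ _ f) (@eI_surjV _ _ f).
- exact: inclG_M.
- exact: eI_fact.
move=> Z' e' m' ep mi fac.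
have [sE sV] := epi_surj ep.
have [fa1 fa2] := fac.
have HxE : forall z, exists x, hE (eI f) x == z.
  by move=> z; case: (eI_surjE z) => x <-; exists x.
have HxV : forall z, exists x, hV (eI f) x == z.
  by move=> z; case: (eI_surjV z) => x <-; exists x.
pose iE z := hE e' (xchoose (HxE z)).
pose iV z := hV e' (xchoose (HxV z)).
have HE : forall z, hE m' (iE z) = hE (iI f) z.
  move=> z; rewrite /iE; have := fa1 (xchoose (HxE z)); rewrite /= => ->.
  exact: (congr1 val (eqP (xchooseP (HxE z)))).
have HV : forall z, hV m' (iV z) = hV (iI f) z.
  move=> z; rewrite /iV; have := fa2 (xchoose (HxV z)); rewrite /= => ->.
  exact: (congr1 val (eqP (xchooseP (HxV z)))).
pose i := mkhom mi HE HV.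
have ce : forall x, iE (hE (eI f) x) = hE e' x.
  move=> x; apply: mi.1; rewrite HE; exact: (esym (fa1 x)).
have cv : forall x, iV (hV (eI f) x) = hV e' x.
  move=> x; apply: mi.2; rewrite HV; exact: (esym (fa2 x)).
exists i; split.
- apply: bij_iso; apply: inj_surj_bij.
  + move=> z1 z2 e; apply: val_inj; rewrite -[val z1]HE -[val z2]HE; congr (hE m'); exact: e.
  + move=> y; case: (sE y) => x <-; exists (hE (eI f) x); exact: ce.
  + move=> z1 z2 e; apply: val_inj; rewrite -[val z1]HV -[val z2]HV; congr (hV m'); exact: e.
  + move=> y; case: (sV y) => x <-; exists (hV (eI f) x); exact: cv.
- by split => x /=; [exact: ce | exact: cv].
- by split => x /=; [exact: HE | exact: HV].
Qed.

Lemma sub_iso A X (m : hom A X) : inM m ->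
  exists h : hom A (IG m), is_iso h /\ heq (comp (iI m) h) m.
Proof.
move=> mi; exists (eI m); split; last exact: eI_fact.
apply: bij_iso; apply: inj_surj_bij.
- by move=> x y /(congr1 val) /= /mi.1.
- exact: eI_surjE.
- by move=> x y /(congr1 val) /= /mi.2.
- exact: eI_surjV.
Qed.

Lemma finitary_thm : finitary.
Proof.
move=> X.
pose T : finType := ({set gE X} * {set gV X})%type.
exists #|T|, (fun i => existT (fun A => hom A X) (subG (enum_val i).1 (enum_val i).2)
  (inclG (enum_val i).1 (enum_val i).2)).
split; first by move=> i; exact: inclG_M.
move=> A m mi.
exists (enum_rank ((hE m @: setT, hV m @: setT) : T)).
rewrite enum_rankK /=.
exact: sub_iso m mi.
Qed.

Definition emptyG : uGraph :=
  @UGraph void void (fun e => match e with end) (fun e => match e with end).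

Lemma init_thm : has_M_initial.
Proof.
exists emptyG => X; split.
- exists (@Hom emptyG X (fun e => match e with end) (fun v => match v with end)
    (fun e => match e with end)); split => [[]|[]].
- by move=> i j _ _; split => [[]|[]].
Qed.

Lemma sEU (A B C D E : Type) (b : A -> B) (c : A -> C) (g : B -> D) (f : C -> D)
  (g' : B -> E) (f' : C -> E) (u : D -> E) :
  sPO b c g f -> sPB b c g' f' -> injective g' -> injective f' ->
  (forall x, u (g x) = g' x) -> (forall x, u (f x) = f' x) -> injective u.
Proof.
case=> P1 P2 P3 P4 P5 [Q1 Q2 Q3] gi fi ug uf d1 d2.
case: (P3 d1) => [[y1 <-]|[z1 <-]]; case: (P3 d2) => [[y2 <-]|[z2 <-]] e.
- by rewrite (gi _ _ (etrans (esym (ug y1)) (etrans e (ug y2)))).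
- have : g' y1 = f' z2 by rewrite -ug -uf.
  case/Q2 => a [<- <-]; exact: P1.
- have : g' y2 = f' z1 by rewrite -ug -uf.
  case/Q2 => a [<- <-]; exact: (esym (P1 a)).
- by rewrite (fi _ _ (etrans (esym (uf z1)) (etrans e (uf z2)))).
Qed.

Lemma EU_thm : M_effective_unions.
Proof.
move=> A B C D E b c g f g' f' bi ci gi fi g'i f'i po pb u [h1 h2] [h3 h4].
have [pE pV] := PO_cPO po bi.
have [qE qV] := PB_cPB pb g'i.
split; [apply: (sEU pE qE g'i.1 f'i.1 h1 h3) | apply: (sEU pV qV g'i.2 f'i.2 h2 h4)].
Qed.

Section FPCc.
Variables (A B D : uGraph) (a : hom A B) (b : hom B D).
Definition SEc := [set x | (x \notin codom (hE b)) || (x \in codom (hE b \o hE a))].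
Definition SVc := [set x | (x \notin codom (hV b)) || (x \in codom (hV b \o hV a))].
Definition C0 := subG SEc SVc.
Definition c0 : hom C0 D := inclG SEc SVc.
Lemma dE_in x : (hE b (hE a x) \in SEc) && (ginc (hE b (hE a x)) \subset SVc).
Proof.
rewrite inE; apply/andP; split; first by rewrite (codom_f (hE b \o hE a) x) orbT.
rewrite !hom_ok -imset_comp; apply/subsetP => v /imsetP [w _ ->]; rewrite inE.
by rewrite (codom_f (hV b \o hV a) w) orbT.
Qed.
Lemma dV_in x : hV b (hV a x) \in SVc.
Proof. by rewrite inE (codom_f (hV b \o hV a) x) orbT. Qed.
Definition dE x : gE C0 := exist (fun y => (y \in SEc) && (ginc y \subset SVc)) _ (dE_in x).
Definition dV x : gV C0 := exist (fun y => y \in SVc) _ (dV_in x).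
Lemma dHE x : hE c0 (dE x) = hE (comp b a) x. Proof. by []. Qed.
Lemma dHV x : hV c0 (dV x) = hV (comp b a) x. Proof. by []. Qed.
Definition d0 : hom A C0 := mkhom (inclG_M SEc SVc) dHE dHV.
Lemma FPC0 : inM a -> inM b -> is_FPC a b c0 d0.
Proof.
move=> ai bi; split.
- apply: cPB_PB => //; split; split.
  + by [].
  + move=> y z e; have := subE_in z; rewrite inE -[val z]/(hE c0 z) -e codom_f /=.
    case/codomP => x ex; exists x; split; first by apply: bi.1; exact: (esym ex).
    by apply: val_inj; transitivity (hE b y); [exact: (esym ex) | exact: e].
  + by move=> x y /ai.1.
  + by [].
  + move=> y z e; have := subV_in z; rewrite inE -[val z]/(hV c0 z) -e codom_f /=.
    case/codomP => x ex; exists x; split; first by apply: bi.2; exact: (esym ex).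
    by apply: val_inj; transitivity (hV b y); [exact: (esym ex) | exact: e].
  + by move=> x y /ai.2.
- move=> A' C' p q r pb.
  have [[P1 P2 P3] [V1 V2 V3]] := PB_cPB pb bi.
  have rV : forall v, hV r v \in SVc.
    move=> v; rewrite inE; case: (boolP (hV r v \in codom (hV b))) => //= /codomP [y ey].
    case: (V2 y v (esym ey)) => x [ex _]; apply/codomP; exists (hV p x).
    by rewrite ey -ex.
  have rE : forall e, (hE r e \in SEc) && (ginc (hE r e) \subset SVc).
    move=> e; apply/andP; split.
    + rewrite inE; case: (boolP (hE r e \in codom (hE b))) => //= /codomP [y ey].
      case: (P2 y e (esym ey)) => x [ex _]; apply/codomP; exists (hE p x).
      by rewrite ey -ex.
    + by rewrite hom_ok; apply/subsetP => v /imsetP [w _ ->]; exact: rV.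
  pose sE e : gE C0 := exist (fun y => (y \in SEc) && (ginc y \subset SVc)) _ (rE e).
  pose sV v : gV C0 := exist (fun y => y \in SVc) _ (rV v).
  have HE : forall e, hE c0 (sE e) = hE r e by [].
  have HV : forall v, hV c0 (sV v) = hV r v by [].
  exists (mkhom (inclG_M _ _) HE HV); split.
  + by split.
  + split => x; apply: val_inj => /=; [exact: (esym (P1 x)) | exact: (esym (V1 x))].
  + move=> s' [q1 q2] _; split => x; apply: val_inj; [exact: q1 | exact: q2].
Qed.
End FPCc.

Lemma FPC_exist_thm : FPCs_of_M_exist.
Proof. move=> A B D a b ai bi; exists (C0 a b), (c0 a b), (d0 a b); exact: FPC0. Qed.

Lemma FPC_stable_thm : M_stable_under_FPC.
Proof.
move=> A B C D a b c d ai bi [pb U].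
have [sE sV] := PB_cPB pb bi.
have di : inM d by split; [apply: sPB_inj sE bi.1 | apply: sPB_inj sV bi.2].
split => //.
have [pb0 U0] := FPC0 ai bi.
have pb0' : is_pullback (comp a (hid A)) (d0 a b) b (c0 a b).
  exact: cPB_PB (PB_cPB pb0 bi) bi.
have pb' : is_pullback (comp a (hid A)) d b c by exact: cPB_PB (PB_cPB pb bi) bi.
case: (U _ _ _ _ _ pb0') => s [[s1 s2] [s3 s4] _].
case: (U0 _ _ _ _ _ pb') => s' [[t1 t2] [t3 t4] _].
case: (U _ _ _ _ _ pb') => s0 [_ _ sU].
have [k1 k2] : heq (comp s s') s0.
  apply: sU; split => x /=.
  - by have := s1 (hE s' x) => /= ->; exact: t1 x.
  - by have := s2 (hV s' x) => /= ->; exact: t2 x.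
  - by have := t3 x => /= ->; exact: s3 x.
  - by have := t4 x => /= ->; exact: s4 x.
have [k3 k4] : heq (hid C) s0 by apply: sU.
have ssE : forall x, hE s (hE s' x) = x by move=> x; have := k1 x; have := k3 x => /= <-.
have ssV : forall x, hV s (hV s' x) = x by move=> x; have := k2 x; have := k4 x => /= <-.
split => x y e.
- rewrite -(ssE x) -(ssE y); congr (hE s); apply: val_inj.
  by have := t1 x; have := t1 y => /= -> ->.
- rewrite -(ssV x) -(ssV y); congr (hV s); apply: val_inj.
  by have := t2 x; have := t2 y => /= -> ->.
Qed.

Theorem mainTheorem1 :
  M_adhesive /\ finitary /\ has_M_initial /\ M_effective_unions /\
  epi_M_factorization /\ FPCs_of_M_exist /\ M_stable_under_FPC.
Proof.
split; first exact: M_adhesive_thm.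
split; first exact: finitary_thm.
split; first exact: init_thm.
split; first exact: EU_thm.
split; first exact: epi_M_thm.
split; first exact: FPC_exist_thm.
exact: FPC_stable_thm.
Qed.
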